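(* Let $N\ge 3$, $0\le p\le \lfloor N/2\rfloor-1$ and $\nu_1,\dots,\nu_{p+1}\in\mathbb C$. For $0\le k\le p$ put $H_{k+1,N-k}:=\tfrac12(E_{k+1,k+1}-E_{N-k,N-k})$, $H^{\mathcal R}_{k}:=H_{k+1,N-k}-H^{\mathcal P}_{k+1}$ and define the canonical extended Jordanian link $$\mathcal F_k(\nu):=\Big(\prod_{s=k+2}^{N-k-1}\exp\big(\xi\nu\,E_{k+1,s}\otimes E_{s,N-k}\,(1+\xi\nu E_{k+1,N-k})^{-1/2}\big)\Big)\exp\big(H_{k+1,N-k}\otimes\sigma_{k+1,N-k}(\nu)\big).$$ Then for each $k$, $$\mathcal F_k(\nu_{k+1})=\exp\big(H^{\mathcal R}_{k}\otimes\sigma_{k+1,N-k}(\nu_{k+1})\big)\,\mathcal F^{\mathcal P}_k(\nu_{k+1}),$$ and the canonical chain factorizes as $$\mathcal F_p(\nu_{p+1})\mathcal F_{p-1}(\nu_p)\cdots\mathcal F_0(\nu_1)=\Big(\prod_{k=0}^{p}\exp\big(H^{\mathcal R}_{k}\otimes\sigma_{k+1,N-k}(\nu_{k+1})\big)\Big)\,\mathcal F^{\mathcal P}_{p\prec0}(\nu_1,\dots,\nu_{p+1}),$$ where the factors $\exp(H^{\mathcal R}_{k}\otimes\sigma_{k+1,N-k}(\nu_{k+1}))$, $k=0,\dots,p$, commute pairwise.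
   Context: Work over $\mathbb C$ with $U=U(sl(N))$ (or $U(gl(N))$ where needed), whose generators $x\in sl(N)$ are primitive: $\Delta(x)=x\otimes1+1\otimes x$. $E_{ij}$ ($1\le i,j\le N$) denote the matrix units of $gl(N)$ and $I=\sum_{s=1}^N E_{ss}$. Let $\xi$ be a formal parameter; all computations take place in the $\xi$-adically completed algebras $U[[\xi]]$, $(U\otimes U)[[\xi]]$, $(U\otimes U\otimes U)[[\xi]]$, and exponentials and powers $(1+\xi c X)^{a}$ are the usual formal power series. For $i<j$ and $c\in\mathbb C$ set $\sigma_{ij}(c):=\ln(1+\xi cE_{ij})=\sum_{m\ge1}(-1)^{m+1}(\xi c)^mE_{ij}^m/m$. For $1\le k\le N$ set $H^{\mathcal P}_k:=E_{kk}-\frac1N I$. For $0\le k\le\lfloor N/2\rfloor-1$ and $\nu\in\mathbb C$ the peripheric link is $$\mathcal F^{\mathcal P}_k(\nu):=\Big(\prod_{s=k+2}^{N-k-1}\exp\big(\xi\nu\,E_{k+1,s}\otimes E_{s,N-k}\big)\Big)\exp\big(H^{\mathcal P}_{k+1}\otimes\sigma_{k+1,N-k}(\nu)\big)$$ (the factors of the product commute pairwise; an empty product is $1$), and the peripheric chain is $\mathcal F^{\mathcal P}_{p\prec0}(\nu_1,\dots,\nu_{p+1}):=\mathcal F^{\mathcal P}_p(\nu_{p+1})\mathcal F^{\mathcal P}_{p-1}(\nu_p)\cdots\mathcal F^{\mathcal P}_0(\nu_1)$. *)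

(* Defs.v *)
From HB Require Import structures.
From mathcomp Require Import all_boot all_order all_algebra.
Set Implicit Arguments. Unset Strict Implicit. Unset Printing Implicit Defensive.
Import Order.TTheory GRing.Theory Num.Theory.
Local Open Scope ring_scope.

(** Formal power series in the central formal parameter xi with coefficients
    in a (noncommutative) K-algebra A, represented by coefficient sequences:
    f represents  \sum_n f n xi^n. *)
Definition ps (A : Type) := nat -> A.

Section PowerSeries.
Variables (K : numFieldType) (A : algType K).

Definition ps_one : ps A := fun n => if n == 0%N then 1 else 0.

Definition ps_const (a : A) : ps A := fun n => if n == 0%N then a else 0.

Definition ps_mul (f g : ps A) : ps A :=
  fun n => \sum_(i < n.+1) f i * g (n - i)%N.

Definition ps_pow (f : ps A) (m : nat) : ps A := iter m (ps_mul f) ps_one.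

Definition ps_shift (f : ps A) : ps A :=
  fun n => if n is n'.+1 then f n' else 0.

Definition ps_lmul (a : A) (f : ps A) : ps A := fun n => a * f n.

(** exp f = \sum_m f^m / m!, for f with zero constant term (then only
    m <= n contributes to the coefficient of xi^n, so this is the usual
    xi-adically convergent exponential). *)
Definition ps_exp (f : ps A) : ps A :=
  fun n => \sum_(m < n.+1) (m`!%:R)^-1 *: ps_pow f m n.

Definition ps_prod (r : seq nat) (F : nat -> ps A) : ps A :=
  foldr (fun s acc => ps_mul (F s) acc) ps_one r.

(** sigma(c) = ln(1 + xi c y) = \sum_{m>=1} (-1)^(m+1) (xi c)^m y^m / m *)
Definition ps_ln1p (c : K) (y : A) : ps A :=
  fun n => if n == 0%N then 0
           else ((-1) ^+ n.+1 * c ^+ n / n%:R) *: y ^+ n.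

Definition gbinom (a : K) (n : nat) : K :=
  (\prod_(i < n) (a - i%:R)) / n`!%:R.

(** (1 + xi c y)^a = \sum_n binom(a,n) (xi c)^n y^n *)
Definition ps_binom (a c : K) (y : A) : ps A :=
  fun n => (gbinom a n * c ^+ n) *: y ^+ n.

End PowerSeries.

(** gl(N) commutation relations for a family E i j (1 <= i,j <= N, 1-based):
    [E_ij, E_kl] = delta_jk E_il - delta_li E_kj. *)
Definition gl_rel (K : numFieldType) (A : algType K) (N : nat)
  (E : nat -> nat -> A) : Prop :=
  forall i j k l, (0 < i <= N)%N -> (0 < j <= N)%N -> (0 < k <= N)%N ->
    (0 < l <= N)%N ->
    E i j * E k l - E k l * E i j =
      (if j == k then E i l else 0) - (if l == i then E k j else 0).

Definition fam_commute (K : numFieldType) (A : algType K) (N : nat)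
  (X Y : nat -> nat -> A) : Prop :=
  forall i j k l, (0 < i <= N)%N -> (0 < j <= N)%N -> (0 < k <= N)%N ->
    (0 < l <= N)%N -> X i j * Y k l = Y k l * X i j.

(** The setting: X i j stands for E_ij (x) 1 and Y i j for 1 (x) E_ij in
    U(gl(N)) (x) U(gl(N)).  All definitions below are the
    images of the paper's elements of (U (x) U)[[xi]] in A[[xi]]. *)
Section Links.
Variables (K : numFieldType) (A : algType K) (N : nat) (X Y : nat -> nat -> A).

Definition IX : A := \sum_(1 <= s < N.+1) X s s.

Definition HP (k : nat) : A := X k k - (N%:R : K)^-1 *: IX.

Definition Hc (k : nat) : A := (2%:R : K)^-1 *: (X k.+1 k.+1 - X (N - k) (N - k)).

Definition HR (k : nat) : A := Hc k - HP k.+1.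

Definition exp_H_sigma (H : A) (k : nat) (nu : K) : ps A :=
  ps_exp (ps_lmul H (ps_ln1p nu (Y k.+1 (N - k)))).

Definition FP_link (k : nat) (nu : K) : ps A :=
  ps_mul
    (ps_prod (iota (k + 2) ((N - k) - (k + 2)))
       (fun s => ps_exp (ps_shift (ps_const (nu *: (X k.+1 s * Y s (N - k)))))))
    (exp_H_sigma (HP k.+1) k nu).

Definition FP_chain (p : nat) (nu : nat -> K) : ps A :=
  ps_prod (rev (iota 0 p.+1)) (fun k => FP_link k (nu k.+1)).

Definition F_link (k : nat) (nu : K) : ps A :=
  ps_mul
    (ps_prod (iota (k + 2) ((N - k) - (k + 2)))
       (fun s => ps_exp (ps_shift
          (ps_lmul (nu *: (X k.+1 s * Y s (N - k)))
                   (ps_binom (- (2%:R : K)^-1) nu (Y k.+1 (N - k)))))))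
    (exp_H_sigma (Hc k) k nu).

Definition F_chain (p : nat) (nu : nat -> K) : ps A :=
  ps_prod (rev (iota 0 p.+1)) (fun k => F_link k (nu k.+1)).

End Links.

(* Main.v *)
Require Import Defs.
From HB Require Import structures.
From mathcomp Require Import all_boot all_order all_algebra.
From mathcomp Require Import boolp zify ring lra.
Set Implicit Arguments. Unset Strict Implicit. Unset Printing Implicit Defensive.
Import Order.TTheory GRing.Theory Num.Theory.
Local Open Scope ring_scope.

Section PSRing.
Variables (K : numFieldType) (A : algType K).

Record PS := MkPS { cf : nat -> A }.
HB.instance Definition _ := gen_eqMixin PS.
HB.instance Definition _ := gen_choiceMixin PS.

Lemma PSext (f g : PS) : (forall n, cf f n = cf g n) -> f = g.
Proof. by case: f => f; case: g => g /= h; congr MkPS; apply: funext. Qed.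

Definition ps_add (f g : PS) : PS := MkPS (fun n => cf f n + cf g n).
Definition ps_opp (f : PS) : PS := MkPS (fun n => - cf f n).
Definition ps_zero : PS := MkPS (fun n => 0).

Lemma ps_addA : associative ps_add.
Proof. by move=> f g h; apply: PSext => n /=; rewrite addrA. Qed.
Lemma ps_addC : commutative ps_add.
Proof. by move=> f g; apply: PSext => n /=; rewrite addrC. Qed.
Lemma ps_add0 : left_id ps_zero ps_add.
Proof. by move=> f; apply: PSext => n /=; rewrite add0r. Qed.
Lemma ps_addN : left_inverse ps_zero ps_opp ps_add.
Proof. by move=> f; apply: PSext => n /=; rewrite addNr. Qed.

HB.instance Definition _ := GRing.isZmodule.Build PS ps_addA ps_addC ps_add0 ps_addN.

Lemma addE (f g : PS) n : cf (f + g) n = cf f n + cf g n. Proof. by []. Qed.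
Lemma oppE (f : PS) n : cf (- f) n = - cf f n. Proof. by []. Qed.
Lemma zeroE n : cf (0 : PS) n = 0. Proof. by []. Qed.
Lemma subE (f g : PS) n : cf (f - g) n = cf f n - cf g n. Proof. by []. Qed.
Lemma sumE I r (P : pred I) (F : I -> PS) n :
  cf (\sum_(i <- r | P i) F i) n = \sum_(i <- r | P i) cf (F i) n.
Proof.
elim: r => [|a r IH]; first by rewrite !big_nil.
by rewrite !big_cons; case: (P a); rewrite ?addE IH.
Qed.

Definition mulP (f g : PS) : PS := MkPS (ps_mul (cf f) (cf g)).
Definition oneP : PS := MkPS (ps_one A).

Definition trunc (m : nat) (f : PS) : {poly A} := \poly_(i < m.+1) cf f i.

Lemma mulP_poly (P Q : {poly A}) (f g : PS) n :
  (forall i, (i <= n)%N -> P`_i = cf f i) -> (forall i, (i <= n)%N -> Q`_i = cf g i) ->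
  (P * Q)`_n = cf (mulP f g) n.
Proof.
move=> hP hQ; rewrite coefM /mulP /ps_mul /=; apply: eq_bigr => i _.
by rewrite hP ?hQ // ?leq_subr // -ltnS.
Qed.

Lemma truncE m (f : PS) i : (i <= m)%N -> (trunc m f)`_i = cf f i.
Proof. by move=> h; rewrite coef_poly ltnS h. Qed.

Lemma mulPA : associative mulP.
Proof.
move=> f g h; apply: PSext => n.
rewrite -(@mulP_poly (trunc n f) (trunc n g * trunc n h)); last 2 first.
- by move=> i; apply: truncE.
- move=> i hi; apply: mulP_poly => j hj; apply: truncE; exact: leq_trans hj hi.
rewrite -(@mulP_poly (trunc n f * trunc n g) (trunc n h)) ?mulrA //.
- move=> i hi; apply: mulP_poly => j hj; apply: truncE; exact: leq_trans hj hi.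
- by move=> i; apply: truncE.
Qed.

Lemma mul1P : left_id oneP mulP.
Proof.
move=> f; apply: PSext => n; rewrite -(@mulP_poly 1 (trunc n f)).
- by rewrite mul1r truncE.
- by move=> i _; rewrite coefC /ps_one.
- by move=> i; apply: truncE.
Qed.
Lemma mulP1 : right_id oneP mulP.
Proof.
move=> f; apply: PSext => n; rewrite -(@mulP_poly (trunc n f) 1).
- by rewrite mulr1 truncE.
- by move=> i; apply: truncE.
- by move=> i _; rewrite coefC /ps_one.
Qed.
Lemma mulPDl : left_distributive mulP ps_add.
Proof.
move=> f g h; apply: PSext => n; rewrite /mulP /ps_mul /ps_add /= -big_split /=.
by apply: eq_bigr => i _; rewrite mulrDl.
Qed.
Lemma mulPDr : right_distributive mulP ps_add.
Proof.
move=> f g h; apply: PSext => n; rewrite /mulP /ps_mul /ps_add /= -big_split /=.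
by apply: eq_bigr => i _; rewrite mulrDr.
Qed.

HB.instance Definition _ := GRing.Zmodule_isPzRing.Build PS mulPA mul1P mulP1 mulPDl mulPDr.

Definition ps_scale (c : K) (f : PS) : PS := MkPS (fun n => c *: cf f n).
Lemma ps_scaleA a b v : ps_scale a (ps_scale b v) = ps_scale (a * b) v.
Proof. by apply: PSext => n; rewrite /ps_scale /= scalerA. Qed.
Lemma ps_scale1 : left_id 1 ps_scale.
Proof. by move=> f; apply: PSext => n; rewrite /ps_scale /= scale1r. Qed.
Lemma ps_scaleDr : right_distributive ps_scale +%R.
Proof. by move=> a f g; apply: PSext => n; rewrite /ps_scale /= scalerDr. Qed.
Lemma ps_scaleDl v : {morph ps_scale^~ v: a b / a + b}.
Proof. by move=> a b; apply: PSext => n; rewrite /ps_scale /= scalerDl. Qed.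
HB.instance Definition _ := GRing.Zmodule_isLmodule.Build K PS ps_scaleA ps_scale1 ps_scaleDr ps_scaleDl.

Lemma mulE (f g : PS) n : cf (f * g) n = \sum_(i < n.+1) cf f i * cf g (n - i)%N. Proof. by []. Qed.
Lemma oneE n : cf (1 : PS) n = if n == 0%N then 1 else 0. Proof. by []. Qed.
Lemma scaleE c (f : PS) n : cf (c *: f) n = c *: cf f n. Proof. by []. Qed.

End PSRing.

Section Basic.
Variables (K : numFieldType) (A : algType K).
Notation PS := (PS A).

Lemma powE (f : PS) m : ps_pow (cf f) m = cf (f ^+ m).
Proof. elim: m => [|m IH] //=; by rewrite exprS /= IH. Qed.

Definition vanish (p : nat) (f : PS) := forall i, (i < p)%N -> cf f i = 0.

Lemma vanishM p q (f g : PS) : vanish p f -> vanish q g -> vanish (p + q) (f * g).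
Proof.
move=> hf hg i hi; rewrite mulE big1 // => j _.
case: (ltnP j p) => hj; first by rewrite hf // mul0r.
rewrite hg ?mulr0 //; have := ltn_ord j; lia.
Qed.

Lemma vanishX (f : PS) m : vanish 1 f -> vanish m (f ^+ m).
Proof.
move=> hf; elim: m => [|m IH]; first by [].
by rewrite exprS -add1n; apply: vanishM.
Qed.

Definition Ex (M : nat) (f : PS) : PS := \sum_(m < M) (m`!%:R)^-1 *: f ^+ m.

Lemma expEx (f : PS) M n : vanish 1 f -> (n < M)%N -> ps_exp (cf f) n = cf (Ex M f) n.
Proof.
move=> hf hn; rewrite /ps_exp /Ex sumE.
rewrite -(subnKC hn) big_split_ord /= [X in _ + X]big1 ?addr0.
  by apply: eq_bigr => i _; rewrite /= powE.
move=> i _ /=.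
have h0 : (n < n.+1 + i)%N by rewrite ltnS leq_addr.
by rewrite (vanishX hf h0) scaler0.
Qed.

Lemma scalePl c (f g : PS) : (c *: f) * g = c *: (f * g).
Proof.
apply: PSext => n; rewrite scaleE mulE mulE scaler_sumr; apply: eq_bigr => i _.
by rewrite scaleE scalerAl.
Qed.
Lemma scalePr c (f g : PS) : f * (c *: g) = c *: (f * g).
Proof.
apply: PSext => n; rewrite scaleE mulE mulE scaler_sumr; apply: eq_bigr => i _.
by rewrite scaleE scalerAr.
Qed.

Lemma mul_low (f f' g g' : PS) n :
  (forall i, (i <= n)%N -> cf f i = cf f' i) -> (forall i, (i <= n)%N -> cf g i = cf g' i) ->
  cf (f * g) n = cf (f' * g') n.
Proof.
move=> hf hg; rewrite mulE mulE; apply: eq_bigr => i _.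
rewrite hf; last by rewrite -ltnS.
by rewrite hg // leq_subr.
Qed.

Definition iota_ (a : A) : PS := MkPS (ps_const a).

Lemma constE a n : cf (iota_ a) n = if n == 0%N then a else 0. Proof. by []. Qed.

Lemma constMl a (g : PS) n : cf (iota_ a * g) n = a * cf g n.
Proof.
rewrite mulE big_ord_recl big1 ?addr0 ?subn0 //.
by move=> i _; rewrite /= mul0r.
Qed.
Lemma constMr a (g : PS) n : cf (g * iota_ a) n = cf g n * a.
Proof.
rewrite mulE big_ord_recr big1 /= ?add0r ?subnn //.
move=> i _; rewrite /= /ps_const subn_eq0 leqNgt ltn_ord /= mulr0 //.
Qed.

Lemma constM a b : iota_ (a * b) = iota_ a * iota_ b.
Proof. by apply: PSext => n; rewrite constMl /= /ps_const; case: (n == 0%N); rewrite ?mulr0. Qed.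
Lemma constD a b : iota_ (a + b) = iota_ a + iota_ b.
Proof. by apply: PSext => n; rewrite /= /ps_const; case: (n == 0%N); rewrite ?addr0. Qed.
Lemma constN a : iota_ (- a) = - iota_ a.
Proof. by apply: PSext => n; rewrite /= /ps_const; case: (n == 0%N); rewrite ?oppr0. Qed.
Lemma constZ (c : K) a : iota_ (c *: a) = c *: iota_ a.
Proof. by apply: PSext => n; rewrite /= /ps_const; case: (n == 0%N); rewrite ?scaler0. Qed.
Lemma const1 : iota_ 1 = 1. Proof. by []. Qed.

Lemma lmulE a (f : PS) : MkPS (ps_lmul a (cf f)) = iota_ a * f.
Proof. by apply: PSext => n; rewrite constMl. Qed.

Definition xi : PS := MkPS (ps_shift (cf (1 : PS))).

Lemma xiMl (g : PS) n : cf (xi * g) n = if n is n'.+1 then cf g n' else 0.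
Proof.
rewrite mulE; case: n => [|n]; first by rewrite big_ord1 /= mul0r.
rewrite big_ord_recl /= mul0r add0r big_ord_recl /= mul1r subn1 /= big1 ?addr0 //.
by move=> i _; rewrite /ps_shift /=  mul0r.
Qed.
Lemma xiMr (g : PS) n : cf (g * xi) n = if n is n'.+1 then cf g n' else 0.
Proof.
rewrite mulE; case: n => [|n]; first by rewrite big_ord1 /= mulr0.
rewrite big_ord_recr /= subnn mulr0 addr0 big_ord_recr /= subSnn mulr1 big1 ?add0r //.
move=> i _; rewrite /ps_shift /=.
have h : (n.+1 - i)%N = (n - i).+1 by rewrite subSn // ltnW.
by rewrite h /= /ps_one subn_eq0 leqNgt ltn_ord mulr0.
Qed.
Lemma xiC (g : PS) : xi * g = g * xi.
Proof. by apply: PSext => n; rewrite xiMl xiMr. Qed.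
Lemma shiftE (f : PS) : MkPS (ps_shift (cf f)) = xi * f.
Proof. by apply: PSext => n; rewrite xiMl. Qed.
Lemma vanish_xi (f : PS) : vanish 1 (xi * f).
Proof. by move=> i; rewrite ltnS leqn0 => /eqP ->; rewrite xiMl. Qed.

End Basic.
Arguments xi {K A}.

Lemma tri_sum (V : zmodType) M (D : nat -> nat -> V) :
  (forall a b, (M <= a + b)%N -> D a b = 0) ->
  \sum_(j < M) \sum_(i < j.+1) D (j - i)%N i = \sum_(a < M) \sum_(b < M) D a b.
Proof.
move=> hD.
have e1 : forall j : 'I_M, \sum_(i < j.+1) D (j - i)%N i =
    \sum_(i < M) (if (i <= j)%N then D (j - i)%N i else 0).
  move=> j; rewrite (big_ord_widen M (fun i => D (j - i)%N i)) //.
  by rewrite big_mkcond.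
rewrite (eq_bigr _ (fun j _ => e1 j)) exchange_big /=.
rewrite [RHS]exchange_big /=; apply: eq_bigr => i _.
have hi := ltn_ord i; move: (nat_of_ord i) hi => {}i hi.
rewrite -(big_mkord xpredT (fun j => if (i <= j)%N then D (j - i)%N i else 0)).
rewrite -(big_mkord xpredT (fun a => D a i)).
rewrite (big_cat_nat (n:=i)) ?(ltnW hi) //=.
rewrite big1_seq ?add0r; last by move=> j /andP[_]; rewrite mem_index_iota => /andP[_ hj]; rewrite leqNgt hj.
rewrite -[in LHS](add0n i) big_addn.
rewrite [RHS](big_cat_nat (n:=(M - i)%N)) ?leq_subr //=.
rewrite [X in _ = _ + X]big1_seq ?addr0; last first.
  by move=> a /andP[_]; rewrite mem_index_iota => /andP[ha _]; apply: hD; lia.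
apply: eq_big_nat => a ha.
rewrite add0n leq_addl addnK //=.
Qed.

Section Exp.
Variables (K : numFieldType) (A : algType K).
Notation PS := (PS A).

Definition pexp (f : PS) : PS := MkPS (ps_exp (cf f)).

Lemma pexpEx (f : PS) n : vanish 1 f -> cf (pexp f) n = cf (Ex n.+1 f) n.
Proof. by move=> hf; rewrite /pexp /= (@expEx _ _ f n.+1 n hf). Qed.

Lemma vanishD (f g : PS) p : vanish p f -> vanish p g -> vanish p (f + g).
Proof. by move=> hf hg i hi; rewrite addE hf ?hg ?addr0. Qed.

Lemma mul_pexp_l (f g : PS) n : vanish 1 f ->
  cf (pexp f * g) n = cf (Ex n.+1 f * g) n.
Proof.
move=> hf; apply: mul_low => // i hi; rewrite /pexp /=; apply: expEx => //.
Qed.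
Lemma mul_pexp_r (f g : PS) n : vanish 1 f ->
  cf (g * pexp f) n = cf (g * Ex n.+1 f) n.
Proof.
move=> hf; apply: mul_low => // i hi; rewrite /pexp /=; apply: expEx => //.
Qed.

Lemma fact_neq0 m : (m`!%:R : K) != 0.
Proof. by rewrite pnatr_eq0 -lt0n fact_gt0. Qed.

Lemma pexpD (f g : PS) : f * g = g * f -> vanish 1 f -> vanish 1 g ->
  pexp (f + g) = pexp f * pexp g.
Proof.
move=> cfg hf hg; apply: PSext => n.
rewrite (pexpEx _ (vanishD hf hg)) (mul_pexp_l _ _ hf) (mul_pexp_r _ _ hg).
set M := n.+1.
pose D a b := ((a`!%:R)^-1 * (b`!%:R)^-1 : K) *: cf (f ^+ a * g ^+ b) n.
have hD : forall a b, (M <= a + b)%N -> D a b = 0.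
  move=> a b hab; rewrite /D.
  by rewrite (vanishM (vanishX hf) (vanishX hg)) ?scaler0 //.
transitivity (\sum_(j < M) \sum_(i < j.+1) D (j - i)%N i).
  rewrite /Ex sumE; apply: eq_bigr => j _.
  rewrite scaleE (exprDn_comm _ cfg) sumE scaler_sumr; apply: eq_bigr => i _.
  rewrite /D -scaler_nat scaleE scalerA; congr (_ *: _).
  have hij : (i <= j)%N by rewrite -ltnS.
  have := bin_fact hij; move/(congr1 (fun m => m%:R : K)); rewrite !natrM => h.
  have hc : ('C(j, i)%:R : K) = j`!%:R / (i`!%:R * (j - i)`!%:R).
    by rewrite -h; field; rewrite !fact_neq0.
  by rewrite hc; field; rewrite !fact_neq0.
rewrite (tri_sum hD).
rewrite /Ex mulr_suml sumE; apply: eq_bigr => a _.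
rewrite mulr_sumr sumE; apply: eq_bigr => b _.
by rewrite scalePl scalePr scalerA scaleE.
Qed.

Lemma conjX (W f g : PS) m : W * f = g * W -> W * f ^+ m = g ^+ m * W.
Proof.
move=> h; elim: m => [|m IH]; first by rewrite !expr0 mulr1 mul1r.
by rewrite exprS mulrA h -mulrA IH mulrA -exprS.
Qed.

Lemma pexp_conj (W f g : PS) : W * f = g * W -> vanish 1 f -> vanish 1 g ->
  W * pexp f = pexp g * W.
Proof.
move=> h hf hg; apply: PSext => n.
rewrite (mul_pexp_l _ _ hg) (mul_pexp_r _ _ hf) /Ex mulr_sumr mulr_suml !sumE.
apply: eq_bigr => m _; by rewrite scalePr scalePl (conjX m h).
Qed.

Lemma pexp_comm (f g : PS) : f * g = g * f -> vanish 1 f -> vanish 1 g ->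
  pexp f * pexp g = pexp g * pexp f.
Proof.
move=> h hf hg.
have h1 : g * pexp f = pexp f * g by apply: pexp_conj.
by apply: pexp_conj.
Qed.

End Exp.

Section Deriv.
Variables (K : numFieldType) (A : algType K).
Notation PS := (PS A).

Lemma commPS (f g : PS) : (forall i j, cf f i * cf g j = cf g j * cf f i) ->
  f * g = g * f.
Proof.
move=> h; apply: PSext => n; rewrite !mulE (reindex_inj rev_ord_inj) /=.
apply: eq_bigr => i _; rewrite subKn; last by rewrite -ltnS.
by rewrite h.
Qed.

Definition Dv (f : PS) : PS := MkPS (fun n => (n.+1)%:R *: cf f n.+1).

Lemma DvD (f g : PS) : Dv (f + g) = Dv f + Dv g.
Proof. by apply: PSext => n; rewrite /Dv /= scalerDr. Qed.
Lemma DvZ c (f : PS) : Dv (c *: f) = c *: Dv f.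
Proof. by apply: PSext => n; rewrite /Dv /= !scalerA mulrC. Qed.
Lemma Dv_sum I (r : seq I) (F : I -> PS) : Dv (\sum_(i <- r) F i) = \sum_(i <- r) Dv (F i).
Proof.
elim: r => [|a r IH]; first by rewrite !big_nil; apply: PSext => n; rewrite /Dv /= scaler0.
by rewrite !big_cons DvD IH.
Qed.
Lemma Dv1 : Dv 1 = 0.
Proof. by apply: PSext => n; rewrite /Dv /= /ps_one /= scaler0. Qed.

Lemma DvM (f g : PS) : Dv (f * g) = Dv f * g + f * Dv g.
Proof.
apply: PSext => n; rewrite addE.
set P := trunc n.+1 f; set Q := trunc n.+1 g.
have hP : forall i, (i <= n.+1)%N -> P`_i = cf f i by move=> i hi; apply: truncE.
have hQ : forall i, (i <= n.+1)%N -> Q`_i = cf g i by move=> i hi; apply: truncE.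
have hP' : forall i, (i <= n)%N -> (P^`())`_i = cf (Dv f) i.
  by move=> i hi; rewrite coef_deriv hP // /Dv /= scaler_nat.
have hQ' : forall i, (i <= n)%N -> (Q^`())`_i = cf (Dv g) i.
  by move=> i hi; rewrite coef_deriv hQ // /Dv /= scaler_nat.
rewrite -(mulP_poly hP' (fun i hi => hQ i (leqW hi))).
rewrite -(mulP_poly (fun i hi => hP i (leqW hi)) hQ').
rewrite -coefD -derivM coef_deriv /Dv /= scaler_nat.
by rewrite (mulP_poly hP hQ).
Qed.

Lemma DvX (f : PS) m : f * Dv f = Dv f * f ->
  Dv (f ^+ m) = m%:R *: (f ^+ m.-1 * Dv f).
Proof.
move=> h; elim: m => [|m IH]; first by rewrite expr0 Dv1 scale0r.
rewrite exprS DvM IH; case: m IH => [|m] IH.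
  by rewrite expr0 mulr1 scale0r mulr0 addr0 scale1r mul1r.
rewrite scalePr mulrA -exprS /= (conjX (m.+1) (esym h)).
by rewrite -[in RHS]nat1r scalerDl scale1r.
Qed.

Lemma Dv_pexp (f : PS) : f * Dv f = Dv f * f -> vanish 1 f ->
  Dv (pexp f) = pexp f * Dv f.
Proof.
move=> h hf; apply: PSext => n.
rewrite (mul_pexp_l _ _ hf).
have -> : cf (Dv (pexp f)) n = cf (Dv (Ex n.+2 f)) n.
  by rewrite /Dv /= (@expEx _ _ f n.+2 n.+1 hf).
rewrite /Ex Dv_sum big_ord_recl DvZ expr0 Dv1 scaler0 add0r mulr_suml !sumE.
apply: eq_bigr => i _; rewrite DvZ (DvX _ h) scalePl scalerA.
have -> : (lift ord0 i).-1 = i by [].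
rewrite !scaleE; congr (_ *: _).
rewrite [nat_of_ord (lift ord0 i)]/= /bump /= add1n factS natrM.
have h1 : (i.+1%:R : K) != 0 by rewrite pnatr_eq0.
by field; rewrite fact_neq0 nat1r h1.
Qed.

End Deriv.

Section Binom.
Variables (K : numFieldType) (A : algType K).
Notation PS := (PS A).
Variables (y : A) (nu a : K).

Definition ycoef (f : PS) := forall n, exists c k, cf f n = c *: y ^+ k.

Lemma ycoef_comm (f g : PS) : ycoef f -> ycoef g -> f * g = g * f.
Proof.
move=> hf hg; apply: commPS => i j.
have [c [k ->]] := hf i; have [d [l ->]] := hg j.
by rewrite -scalerAl -scalerAr -scalerAl -scalerAr -!exprD addnC scalerA mulrC scalerA.
Qed.

Lemma ycoefZ c (f : PS) : ycoef f -> ycoef (c *: f).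
Proof. by move=> hf n; have [d [k e]] := hf n; exists (c * d), k; rewrite scaleE e scalerA. Qed.

Definition L : PS := MkPS (ps_ln1p nu y).
Definition B : PS := MkPS (ps_binom a nu y).
Definition u : PS := iota_ (nu *: y).
Definition rho : PS := 1 + xi * u.

Lemma ycoefL : ycoef L.
Proof.
move=> n; rewrite /L /= /ps_ln1p; case: (n == 0%N).
  by exists 0, 0%N; rewrite scale0r.
by eexists; exists n.
Qed.

Lemma vanishL : vanish 1 L.
Proof. by move=> i; rewrite ltnS leqn0 => /eqP ->. Qed.

Lemma DLE n : cf (Dv L) n = ((-1) ^+ n * nu ^+ n.+1) *: y ^+ n.+1.
Proof.
rewrite /Dv /L /= /ps_ln1p /= scalerA; congr (_ *: _).
have h1 : (n.+1%:R : K) != 0 by rewrite pnatr_eq0.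
by rewrite !exprS; field; rewrite nat1r.
Qed.

Lemma ycoefDL : ycoef (Dv L).
Proof. by move=> n; rewrite DLE; eexists; eexists. Qed.

Lemma ycoef_u : ycoef u.
Proof.
move=> n; rewrite /u constE; case: (n == 0%N).
  by exists nu, 1%N; rewrite expr1.
by exists 0, 0%N; rewrite scale0r.
Qed.

Lemma rho_comm (g : PS) : ycoef g -> rho * g = g * rho.
Proof.
move=> hg; rewrite /rho mulrDl mulrDr mul1r mulr1 -mulrA (ycoef_comm ycoef_u hg).
by rewrite mulrA xiC mulrA.
Qed.

Lemma rhoM (F : PS) n :
  cf (rho * F) n = cf F n + (if n is n'.+1 then (nu *: y) * cf F n' else 0).
Proof.
rewrite /rho mulrDl mul1r addE -mulrA xiMl; case: n => // n.
by rewrite constMl.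
Qed.

Lemma rhoDL : rho * Dv L = u.
Proof.
apply: PSext => n; rewrite rhoM /u constE; case: n => [|n].
  by move: (DLE 0) => -> /=; rewrite addr0 expr0 mul1r expr1.
rewrite !DLE /= -scalerAl -scalerAr scalerA -exprS -scalerDl.
have -> : (-1) ^+ n.+1 * nu ^+ n.+2 + nu * ((-1) ^+ n * nu ^+ n.+1) = 0.
  by rewrite !exprS; ring.
by rewrite scale0r.
Qed.

Lemma gbinomS n : gbinom a n.+1 = gbinom a n * (a - n%:R) / (n.+1)%:R.
Proof.
rewrite /gbinom big_ord_recr /= factS natrM.
have h1 : (n.+1%:R : K) != 0 by rewrite pnatr_eq0.
by field; rewrite fact_neq0 /= nat1r h1.
Qed.

Lemma binom_exp : pexp (a *: L) = B.
Proof.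
set e := pexp (a *: L).
have yaL : ycoef (a *: L) by apply: ycoefZ; apply: ycoefL.
have vaL : vanish 1 (a *: L) by move=> i hi; rewrite scaleE vanishL ?scaler0.
have DaL : Dv (a *: L) = a *: Dv L by rewrite DvZ.
have cDe : Dv e = e * (a *: Dv L).
  rewrite -DaL; apply: Dv_pexp => //; apply: ycoef_comm => //.
  by rewrite DaL; apply: ycoefZ; apply: ycoefDL.
have rho_e : rho * e = e * rho.
  apply: pexp_conj => //; exact: rho_comm.
have u_e : u * e = e * u.
  apply: pexp_conj => //; exact: ycoef_comm ycoef_u yaL.
have key : rho * Dv e = a *: (u * e).
  by rewrite cDe mulrA rho_e -mulrA scalePr rhoDL scalePr -u_e.
have rec : forall n, (n.+1)%:R *: cf e n.+1 + (nu *: y) * (n%:R *: cf e n)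
                     = a *: ((nu *: y) * cf e n).
  move=> n; have h : cf (rho * Dv e) n = cf (a *: (u * e)) n by rewrite key.
  rewrite rhoM scaleE constMl in h; rewrite -h.
  case: n {h} => [|n]; first by rewrite scale0r mulr0 addr0.
  by [].
apply: PSext => n; elim: n => [|n IH].
  rewrite /e /pexp /= /ps_exp big_ord1 /B /= /ps_binom /gbinom big_ord0 /=.
  by rewrite !expr0 /ps_one /= mulr1 div1r.
have hn : ((n.+1)%:R : K) != 0 by rewrite pnatr_eq0.
have -> : cf e n.+1 = ((n.+1)%:R)^-1 *: (a *: ((nu *: y) * cf e n) - (nu *: y) * (n%:R *: cf e n)).
  by rewrite -(rec n) addrK scalerA mulVf ?scale1r.
rewrite IH /B /= /ps_binom gbinomS -!scalerAr -!scalerAl !scalerA -exprS.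
rewrite -scalerBl scalerA; congr (_ *: _).
rewrite exprS; ring.
Qed.

End Binom.

Section GL.
Variables (K : numFieldType) (A : algType K) (N : nat) (X : nat -> nat -> A).
Hypothesis hX : gl_rel N X.

Definition inr (i : nat) := (0 < i <= N)%N.

Lemma sum_delta (F : nat -> A) a : inr a ->
  \sum_(1 <= s < N.+1) (if s == a then F s else 0) = F a.
Proof.
move=> ha; rewrite -big_mkcond big_nat1_eq.
by move: ha; rewrite /inr ltnS => ->.
Qed.

Lemma IX_comm a b : inr a -> inr b -> IX N X * X a b = X a b * IX N X.
Proof.
move=> ha hb; apply/eqP; rewrite -subr_eq0 /IX mulr_suml mulr_sumr -sumrB.
have -> : \sum_(1 <= s < N.+1) (X s s * X a b - X a b * X s s) =
  \sum_(1 <= s < N.+1) ((if s == a then X a b else 0) - (if s == b then X a b else 0)).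
  apply: eq_big_nat => s hs; rewrite hX //; try lia.
  have -> : (if s == a then X s b else 0) = (if s == a then X a b else 0).
    by case: eqP => [->|].
  have -> : (if b == s then X a s else 0) = (if s == b then X a b else 0).
    by rewrite eq_sym; case: eqP => [->|].
  by [].
rewrite sumrB (sum_delta (fun _ => X a b) ha) (sum_delta (fun _ => X a b) hb).
by rewrite subrr.
Qed.

Definition wt (D : A) (w : nat -> nat -> K) :=
  forall a b, inr a -> inr b -> D * X a b = X a b * D + w a b *: X a b.

Lemma wt_diag j : inr j -> wt (X j j) (fun a b => (j == a)%:R - (j == b)%:R).
Proof.
move=> hj a b ha hb.
rewrite -[X j j * X a b](subrK (X a b * X j j)) hX // addrC; congr (_ + _).
rewrite scalerBl (eq_sym j b).
case: (eqVneq j a) => [->|hja]; case: (eqVneq b j) => [->|hbj] /=;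
  rewrite ?scale1r ?scale0r //; case: eqP => [->|] /=; by rewrite ?scale1r ?scale0r.
Qed.

Lemma wt_IX : wt (IX N X) (fun _ _ => 0).
Proof. by move=> a b ha hb; rewrite scale0r addr0 IX_comm. Qed.

Lemma wtD D1 D2 w1 w2 : wt D1 w1 -> wt D2 w2 -> wt (D1 + D2) (fun a b => w1 a b + w2 a b).
Proof.
move=> h1 h2 a b ha hb; rewrite mulrDl mulrDr h1 // h2 // scalerDl; by rewrite addrACA.
Qed.
Lemma wtN D w : wt D w -> wt (- D) (fun a b => - w a b).
Proof. by move=> h a b ha hb; rewrite mulNr mulrN h // opprD scaleNr. Qed.
Lemma wtZ c D w : wt D w -> wt (c *: D) (fun a b => c * w a b).
Proof.
by move=> h a b ha hb; rewrite -scalerAl -scalerAr h // scalerDr scalerA.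
Qed.
Lemma wtB D1 D2 w1 w2 : wt D1 w1 -> wt D2 w2 -> wt (D1 - D2) (fun a b => w1 a b - w2 a b).
Proof. by move=> h1 h2; apply: wtD => //; apply: wtN. Qed.

Definition wHP j (a b : nat) : K := ((j == a)%:R - (j == b)%:R) - (N%:R)^-1 * 0.
Lemma wt_HP j : inr j -> wt (HP N X j) (wHP j).
Proof. by move=> hj; apply: wtB; [apply: wt_diag|apply: wtZ; apply: wt_IX]. Qed.

Definition wHc k (a b : nat) : K :=
  (2%:R)^-1 * (((k.+1 == a)%:R - (k.+1 == b)%:R) - (((N - k)%N == a)%:R - ((N - k)%N == b)%:R)).
Lemma wt_Hc k : inr k.+1 -> inr (N - k)%N -> wt (Hc N X k) (wHc k).
Proof. by move=> h1 h2; apply: wtZ; apply: wtB; apply: wt_diag. Qed.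

Definition wHR k a b := wHc k a b - wHP k.+1 a b.
Lemma wt_HR k : inr k.+1 -> inr (N - k)%N -> wt (HR N X k) (wHR k).
Proof. by move=> h1 h2; apply: wtB; [apply: wt_Hc|apply: wt_HP]. Qed.

Definition dcomm (D : A) := (forall i, inr i -> D * X i i = X i i * D) /\ D * IX N X = IX N X * D.

Lemma wt_dcomm D w : wt D w -> (forall i, w i i = 0) -> dcomm D.
Proof.
move=> h h0; have hd : forall i, inr i -> D * X i i = X i i * D.
  by move=> i hi; rewrite h // h0 scale0r addr0.
split => //; rewrite /IX mulr_suml mulr_sumr; apply: eq_big_nat => s hs.
by apply: hd; rewrite /inr; lia.
Qed.

Lemma dcomm_HP D j : dcomm D -> inr j -> D * HP N X j = HP N X j * D.
Proof.
case=> h1 h2 hj; rewrite /HP mulrBr mulrBl h1 // -scalerAr -scalerAl h2 //.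
Qed.
Lemma dcomm_Hc D k : dcomm D -> inr k.+1 -> inr (N - k)%N -> D * Hc N X k = Hc N X k * D.
Proof.
case=> h1 h2 hk1 hk2; rewrite /Hc -scalerAr -scalerAl mulrBr mulrBl !h1 //.
Qed.
Lemma dcomm_HR D k : dcomm D -> inr k.+1 -> inr (N - k)%N -> D * HR N X k = HR N X k * D.
Proof.
move=> h hk1 hk2; rewrite /HR mulrBr mulrBl dcomm_Hc // dcomm_HP //.
Qed.

End GL.

Section Gen.
Variables (K : numFieldType) (A : algType K).
Notation PS := (PS A).

Lemma Lcomm_const (a y : A) nu : a * y = y * a -> iota_ a * L y nu = L y nu * iota_ a.
Proof.
move=> h; apply: PSext => n; rewrite constMl constMr /L /= /ps_ln1p.
case: (n == 0%N); first by rewrite mulr0 mul0r.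
by rewrite -scalerAr -scalerAl (commrX n h).
Qed.

Lemma LL_comm (y1 y2 : A) nu1 nu2 : y1 * y2 = y2 * y1 ->
  L y1 nu1 * L y2 nu2 = L y2 nu2 * L y1 nu1.
Proof.
move=> h; apply: commPS => i j; rewrite /L /= /ps_ln1p.
case: (i == 0%N); rewrite ?mulr0 ?mul0r //; case: (j == 0%N); rewrite ?mulr0 ?mul0r //.
rewrite -!scalerAr -!scalerAl scalerA mulrC -scalerA; congr (_ *: (_ *: _)).
apply: commrX; apply: commr_sym; apply: commrX; exact: (esym h).
Qed.

Lemma hL_comm (h1 h2 y1 y2 : A) nu1 nu2 :
  h1 * h2 = h2 * h1 -> h1 * y2 = y2 * h1 -> h2 * y1 = y1 * h2 -> y1 * y2 = y2 * y1 ->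
  (iota_ h1 * L y1 nu1) * (iota_ h2 * L y2 nu2) = (iota_ h2 * L y2 nu2) * (iota_ h1 * L y1 nu1).
Proof.
move=> c12 c1 c2 cy.
have E : forall (g1 g2 z1 z2 : A) n1 n2, g2 * z1 = z1 * g2 ->
    (iota_ g1 * L z1 n1) * (iota_ g2 * L z2 n2) = iota_ (g1 * g2) * (L z1 n1 * L z2 n2).
  move=> g1 g2 z1 z2 n1 n2 c; rewrite constM -!mulrA; congr (_ * _).
  by rewrite !mulrA (Lcomm_const _ c).
by rewrite !E // c12 (LL_comm _ _ cy).
Qed.

Lemma hL_vanish (h y : A) nu : vanish 1 (iota_ h * L y nu).
Proof. by move=> i; rewrite ltnS leqn0 => /eqP ->; rewrite constMl /= mulr0. Qed.

Definition PSprod (r : seq nat) (F : nat -> PS) : PS := foldr (fun s acc => F s * acc) 1 r.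

Lemma ps_prodE r (G : nat -> ps A) : ps_prod r G = cf (PSprod r (fun s => MkPS (G s))).
Proof. by elim: r => [|s r IH] //=; rewrite IH. Qed.

Lemma PSprod_conj (W : PS) r (F G : nat -> PS) :
  (forall s, s \in r -> W * F s = G s * W) -> W * PSprod r F = PSprod r G * W.
Proof.
elim: r => [|s r IH] h /=; first by rewrite mulr1 mul1r.
have h' : forall t, t \in r -> W * F t = G t * W.
  by move=> t ht; apply: h; rewrite in_cons ht orbT.
by rewrite mulrA h ?mem_head // -mulrA IH // mulrA.
Qed.

Lemma PSprod_rcons r s (F : nat -> PS) : PSprod (rcons r s) F = PSprod r F * F s.
Proof. by elim: r => [|t r IH] /=; rewrite ?mul1r ?mulr1 // IH mulrA. Qed.

End Gen.

Section Main.
Variables (K : numFieldType) (A : algType K) (N : nat) (X Y : nat -> nat -> A).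
Hypotheses (hX : gl_rel N X) (hY : gl_rel N Y) (hXY : fam_commute N X Y).
Notation PS := (PS A).

Definition ycomm (c : A) := forall a b, inr N a -> inr N b -> c * Y a b = Y a b * c.

Lemma ycommD c d : ycomm c -> ycomm d -> ycomm (c + d).
Proof. by move=> h1 h2 a b ha hb; rewrite mulrDl mulrDr h1 ?h2. Qed.
Lemma ycommN c : ycomm c -> ycomm (- c).
Proof. by move=> h a b ha hb; rewrite mulNr mulrN h. Qed.
Lemma ycommB c d : ycomm c -> ycomm d -> ycomm (c - d).
Proof. by move=> h1 h2; apply: ycommD => //; apply: ycommN. Qed.
Lemma ycommZ (t : K) c : ycomm c -> ycomm (t *: c).
Proof. by move=> h a b ha hb; rewrite -scalerAl -scalerAr h. Qed.
Lemma ycommX i j : inr N i -> inr N j -> ycomm (X i j).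
Proof. by move=> hi hj a b ha hb; apply: hXY. Qed.
Lemma ycommIX : ycomm (IX N X).
Proof.
move=> a b ha hb; rewrite /IX mulr_suml mulr_sumr; apply: eq_big_nat => s hs.
by apply: hXY => //; rewrite /inr; lia.
Qed.
Lemma ycommHP j : inr N j -> ycomm (HP N X j).
Proof. by move=> hj; apply: ycommB; [apply: ycommX|apply: ycommZ; apply: ycommIX]. Qed.
Lemma ycommHc k : inr N k.+1 -> inr N (N - k)%N -> ycomm (Hc N X k).
Proof. by move=> h1 h2; apply: ycommZ; apply: ycommB; apply: ycommX. Qed.
Lemma ycommHR k : inr N k.+1 -> inr N (N - k)%N -> ycomm (HR N X k).
Proof. by move=> h1 h2; apply: ycommB; [apply: ycommHc|apply: ycommHP]. Qed.

Lemma Ycomm a b c d : inr N a -> inr N b -> inr N c -> inr N d -> b != c -> d != a ->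
  Y a b * Y c d = Y c d * Y a b.
Proof.
move=> ha hb hc hd hbc hda; apply/eqP; rewrite -subr_eq0 hY //.
by rewrite (negPf hbc) (negPf hda) subrr.
Qed.

Lemma dcommHR k : inr N k.+1 -> inr N (N - k)%N -> dcomm N X (HR N X k).
Proof.
move=> h1 h2; apply: (wt_dcomm (wt_HR hX h1 h2)) => i.
by rewrite /wHR /wHc /wHP; ring.
Qed.
Lemma dcommHP j : inr N j -> dcomm N X (HP N X j).
Proof.
move=> h; apply: (wt_dcomm (wt_HP hX h)) => i.
by rewrite /wHP; ring.
Qed.

Definition yk k := Y k.+1 (N - k)%N.
Definition Lk k nu := L (yk k) nu.
Definition Zs k nu s := nu *: (X k.+1 s * Y s (N - k)%N).
Definition Rk k nu := pexp (iota_ (HR N X k) * Lk k nu).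
Definition HPe k nu := pexp (iota_ (HP N X k.+1) * Lk k nu).
Definition Pf k nu s := pexp (xi * iota_ (Zs k nu s)).
Definition Pg k nu s := pexp (xi * (iota_ (Zs k nu s) * B (yk k) nu (- (2%:R)^-1))).
Definition rg k := iota (k + 2) ((N - k) - (k + 2)).

Lemma etaPS (p : PS) : MkPS (cf p) = p. Proof. by case: p. Qed.

Lemma conv_exp H k nu : MkPS (exp_H_sigma N Y H k nu) = pexp (iota_ H * Lk k nu).
Proof.
rewrite /exp_H_sigma /pexp; congr MkPS; congr ps_exp; apply: funext => n.
by rewrite constMl.
Qed.

Lemma conv_FP k nu : MkPS (FP_link N X Y k nu) = PSprod (rg k) (Pf k nu) * HPe k nu.
Proof.
rewrite /FP_link.
transitivity (MkPS (ps_prod (iota (k + 2) (N - k - (k + 2)))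
       (fun s => ps_exp (ps_shift (ps_const (nu *: (X k.+1 s * Y s (N - k)%N)))))) *
    MkPS (exp_H_sigma N Y (HP N X k.+1) k nu)); first by [].
rewrite ps_prodE etaPS conv_exp; congr (PSprod _ _ * _); apply: funext => s.
by rewrite /Pf /pexp -shiftE.
Qed.

Lemma conv_F k nu : MkPS (F_link N X Y k nu) = PSprod (rg k) (Pg k nu) * pexp (iota_ (Hc N X k) * Lk k nu).
Proof.
rewrite /F_link.
transitivity (MkPS (ps_prod (iota (k + 2) (N - k - (k + 2)))
       (fun s => ps_exp (ps_shift
          (ps_lmul (nu *: (X k.+1 s * Y s (N - k)%N))
                   (ps_binom (- (2%:R : K)^-1) nu (Y k.+1 (N - k)%N)))))) *
    MkPS (exp_H_sigma N Y (Hc N X k) k nu)); first by [].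
rewrite ps_prodE etaPS conv_exp; congr (PSprod _ _ * _); apply: funext => s.
rewrite /Pg /pexp -shiftE -lmulE //.
Qed.

Lemma scalarL (c : K) (y : A) (nu : K) : c *: L y nu = iota_ (c *: 1) * L y nu.
Proof. by rewrite constZ const1 scalePl mul1r. Qed.

Lemma R_split k nu : inr N k.+1 -> inr N (N - k)%N ->
  pexp (iota_ (Hc N X k) * Lk k nu) = Rk k nu * HPe k nu.
Proof.
move=> h1 h2.
have -> : Hc N X k = HR N X k + HP N X k.+1 by rewrite /HR subrK.
rewrite constD mulrDl pexpD //; try exact: hL_vanish.
apply: hL_comm => //.
- exact: (dcomm_HP (dcommHR h1 h2) h1).
- exact: (ycommHR h1 h2 h1 h2).
- exact: (ycommHP h1 h1 h2).
Qed.

Lemma scal_comm (c : K) (a : A) : (c *: 1) * a = a * (c *: 1).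
Proof. by rewrite -scalerAl -scalerAr mul1r mulr1. Qed.

Lemma conjZ k nu s : inr N k.+1 -> inr N (N - k)%N -> (k.+1 != N - k)%N ->
  s \in rg k -> Rk k nu * Pf k nu s = Pg k nu s * Rk k nu.
Proof.
move=> h1 h2 hkN; rewrite /rg mem_iota => hs.
have hsr : inr N s by rewrite /inr; lia.
have hs1 : s != k.+1 by apply/eqP; lia.
have hs2 : s != (N - k)%N by apply/eqP; lia.
set c : K := - (2%:R)^-1.
set Z := Zs k nu s.
set W := Rk k nu.
have Zy : Z * yk k = yk k * Z.
  rewrite /Z /Zs /yk -scalerAl -scalerAr; congr (_ *: _).
  rewrite -mulrA (Ycomm hsr h2 h1 h2) ?mulrA ?(hXY h1 hsr h1 h2) //; last by rewrite eq_sym.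
  by rewrite eq_sym.
have wv : wHR K N k k.+1 s = c.
  rewrite /wHR /wHc /wHP /c eqxx (eq_sym k.+1 s) (negPf hs1).
  rewrite (eq_sym (N - k)%N) (negPf hkN) (eq_sym (N - k)%N s) (negPf hs2) /=.
  rewrite !subr0 !mulr0 !subr0 mulr1.
  by rewrite [X in _ - X = _](splitr 1) div1r opprD addrA subrr add0r.
have HZ : HR N X k * Z = Z * HR N X k + c *: Z.
  have -> : c *: Z = nu *: (c *: (X k.+1 s * Y s (N - k)%N)) by rewrite /Z /Zs !scalerA mulrC.
  rewrite /Z /Zs -scalerAr -scalerAl -scalerDr; congr (_ *: _).
  rewrite mulrA (wt_HR hX h1 h2 h1 hsr) wv mulrDl -!mulrA (ycommHR h1 h2 hsr h2).
  by rewrite -scalerAl.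
have c1 : iota_ Z * (iota_ (c *: 1) * Lk k nu + iota_ (HR N X k) * Lk k nu)
          = (iota_ (HR N X k) * Lk k nu) * iota_ Z.
  transitivity (iota_ (Z * HR N X k + c *: Z) * Lk k nu).
    rewrite [in RHS]constD [in RHS]mulrDl [in LHS]mulrDr !mulrA -!constM [in RHS]addrC; congr (iota_ _ * _ + _).
    by rewrite -scalerAr mulr1.
  rewrite -HZ constM -!mulrA; congr (_ * _); rewrite /Lk; exact: Lcomm_const Zy.
have e1 : pexp (iota_ (c *: 1) * Lk k nu + iota_ (HR N X k) * Lk k nu)
          = B (yk k) nu c * W.
  rewrite pexpD; try exact: hL_vanish; last first.
    apply: hL_comm => //; first exact: scal_comm.
      exact: scal_comm.
    exact: (ycommHR h1 h2 h1 h2).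
  by rewrite -scalarL binom_exp.
have e2 : iota_ Z * (B (yk k) nu c * W) = W * iota_ Z.
  rewrite -e1; apply: pexp_conj => //; try exact: hL_vanish.
  by apply: vanishD; apply: hL_vanish.
apply: pexp_conj; try exact: vanish_xi.
by rewrite mulrA -xiC -mulrA -e2 !mulrA.
Qed.

Lemma link_fact k nu : inr N k.+1 -> inr N (N - k)%N -> (k.+1 != N - k)%N ->
  PSprod (rg k) (Pg k nu) * pexp (iota_ (Hc N X k) * Lk k nu) =
  Rk k nu * (PSprod (rg k) (Pf k nu) * HPe k nu).
Proof.
move=> h1 h2 hkN; rewrite R_split // mulrA -(@PSprod_conj _ _ (Rk k nu) (rg k) (Pf k nu) (Pg k nu)) ?mulrA //.
by move=> s hs; apply: conjZ.
Qed.

Lemma R_comm k l nuk nul : (2 * k.+1 <= N)%N -> (2 * l.+1 <= N)%N ->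
  Rk k nuk * Rk l nul = Rk l nul * Rk k nuk.
Proof.
move=> hk hl.
have k1 : inr N k.+1 by rewrite /inr; lia.
have k2 : inr N (N - k)%N by rewrite /inr; lia.
have l1 : inr N l.+1 by rewrite /inr; lia.
have l2 : inr N (N - l)%N by rewrite /inr; lia.
apply: pexp_comm; try exact: hL_vanish.
apply: hL_comm.
- exact: (dcomm_HR (dcommHR k1 k2) l1 l2).
- exact: (ycommHR k1 k2 l1 l2).
- exact: (ycommHR l1 l2 k1 k2).
- by apply: Ycomm => //; apply/eqP; lia.
Qed.

Lemma R_Pf k l nuk nul s : (k < l)%N -> (2 * l.+1 <= N)%N -> s \in rg l ->
  Rk k nuk * Pf l nul s = Pf l nul s * Rk k nuk.
Proof.
move=> hkl hl; rewrite /rg mem_iota => hs.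
have k1 : inr N k.+1 by rewrite /inr; lia.
have k2 : inr N (N - k)%N by rewrite /inr; lia.
have l1 : inr N l.+1 by rewrite /inr; lia.
have l2 : inr N (N - l)%N by rewrite /inr; lia.
have sr : inr N s by rewrite /inr; lia.
set Z := Zs l nul s.
have Zy : Z * yk k = yk k * Z.
  rewrite /Z /Zs /yk -scalerAl -scalerAr; congr (_ *: _).
  rewrite -mulrA (Ycomm sr l2 k1 k2) ?mulrA ?(hXY l1 sr k1 k2) //; apply/eqP; lia.
have wv : wHR K N k l.+1 s = 0.
  have e1 : (k.+1 == l.+1) = false by apply/eqP; lia.
  have e2 : (k.+1 == s) = false by apply/eqP; lia.
  have e3 : ((N - k)%N == l.+1) = false by apply/eqP; lia.
  have e4 : ((N - k)%N == s) = false by apply/eqP; lia.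
  by rewrite /wHR /wHc /wHP e1 e2 e3 e4 /= !subrr !mulr0 !subrr.
have HZ : HR N X k * Z = Z * HR N X k.
  rewrite /Z /Zs -scalerAr -scalerAl; congr (_ *: _).
  rewrite mulrA (wt_HR hX k1 k2 l1 sr) wv scale0r addr0 -!mulrA (ycommHR k1 k2 sr l2) //.
apply: pexp_comm; try exact: vanish_xi; try exact: hL_vanish.
rewrite mulrA -xiC -!mulrA; congr (_ * _).
rewrite /Lk -(Lcomm_const _ Zy) !mulrA -!constM HZ //.
Qed.

Lemma R_HPe k l nuk nul : (k < l)%N -> (2 * l.+1 <= N)%N ->
  Rk k nuk * HPe l nul = HPe l nul * Rk k nuk.
Proof.
move=> hkl hl.
have k1 : inr N k.+1 by rewrite /inr; lia.
have k2 : inr N (N - k)%N by rewrite /inr; lia.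
have l1 : inr N l.+1 by rewrite /inr; lia.
have l2 : inr N (N - l)%N by rewrite /inr; lia.
apply: pexp_comm; try exact: hL_vanish.
apply: hL_comm.
- exact: (dcomm_HP (dcommHR k1 k2) l1).
- exact: (ycommHR k1 k2 l1 l2).
- exact: (ycommHP l1 k1 k2).
- by apply: Ycomm => //; apply/eqP; lia.
Qed.

Lemma R_P k l nuk nul : (k < l)%N -> (2 * l.+1 <= N)%N ->
  Rk k nuk * (PSprod (rg l) (Pf l nul) * HPe l nul) =
  (PSprod (rg l) (Pf l nul) * HPe l nul) * Rk k nuk.
Proof.
move=> hkl hl; rewrite mulrA (@PSprod_conj _ _ (Rk k nuk) _ _ (Pf l nul)).
  by rewrite -mulrA R_HPe // mulrA.
by move=> s hs; apply: R_Pf.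
Qed.

End Main.

Lemma iotaS0 q : iota 0 q.+2 = rcons (iota 0 q.+1) q.+1.
Proof. by rewrite -addn1 iotaD add0n cats1. Qed.

Lemma PSprod_cons (K : numFieldType) (A : algType K) s r (F : nat -> PS A) :
  PSprod (s :: r) F = F s * PSprod r F.
Proof. by []. Qed.

Theorem mainTheorem1 (K : numFieldType) (A : algType K) (N : nat)
  (X Y : nat -> nat -> A)
  (hX : gl_rel N X) (hY : gl_rel N Y) (hXY : fam_commute N X Y)
  (p : nat) (nu : nat -> K)
  (hN : (3 <= N)%N) (hp : (p <= N./2 - 1)%N) :
  (forall k, (k <= p)%N ->
     F_link N X Y k (nu k.+1) =
     ps_mul (exp_H_sigma N Y (HR N X k) k (nu k.+1)) (FP_link N X Y k (nu k.+1)))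
  /\
  F_chain N X Y p nu =
    ps_mul (ps_prod (iota 0 p.+1)
              (fun k => exp_H_sigma N Y (HR N X k) k (nu k.+1)))
           (FP_chain N X Y p nu)
  /\
  (forall k l, (k <= p)%N -> (l <= p)%N ->
     ps_mul (exp_H_sigma N Y (HR N X k) k (nu k.+1))
            (exp_H_sigma N Y (HR N X l) l (nu l.+1)) =
     ps_mul (exp_H_sigma N Y (HR N X l) l (nu l.+1))
            (exp_H_sigma N Y (HR N X k) k (nu k.+1))).
Proof.
have e := odd_double_half N; rewrite -mul2n in e.
have h2 : (2 * p.+1 <= N)%N by lia.
have hk : forall k, (k <= p)%N -> (2 * k.+1 <= N)%N by move=> k hk; lia.
pose Fk k := MkPS (F_link N X Y k (nu k.+1)).
pose Pk k := MkPS (FP_link N X Y k (nu k.+1)).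
pose Rk' k := Rk N X Y k (nu k.+1).
have claim1 : forall k, (k <= p)%N -> Fk k = Rk' k * Pk k.
  move=> k hkp; have := hk k hkp => hk2.
  by rewrite /Fk /Pk /Rk' conv_F conv_FP link_fact //; rewrite /inr; lia.
split.
  move=> k hkp.
  change (cf (Fk k) = cf (MkPS (exp_H_sigma N Y (HR N X k) k (nu k.+1)) * Pk k)).
  by rewrite claim1 // conv_exp.
split; last first.
  move=> k l hkp hlp.
  change (cf (MkPS (exp_H_sigma N Y (HR N X k) k (nu k.+1)) * MkPS (exp_H_sigma N Y (HR N X l) l (nu l.+1))) =
          cf (MkPS (exp_H_sigma N Y (HR N X l) l (nu l.+1)) * MkPS (exp_H_sigma N Y (HR N X k) k (nu k.+1)))).
  by rewrite !conv_exp R_comm // ?hk.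
have chain : forall q, (q <= p)%N ->
  PSprod (rev (iota 0 q.+1)) Fk = PSprod (iota 0 q.+1) Rk' * PSprod (rev (iota 0 q.+1)) Pk.
  elim=> [|q IH] hq.
    by rewrite /= !mulr1 claim1.
  rewrite iotaS0 !rev_rcons (PSprod_cons _ _ Fk) (PSprod_cons _ _ Pk) IH ?(ltnW hq) // claim1 //.
  have hq2 := hk _ hq.
  have c1 : Pk q.+1 * PSprod (iota 0 q.+1) Rk' = PSprod (iota 0 q.+1) Rk' * Pk q.+1.
    apply: PSprod_conj => s; rewrite mem_iota => hs.
    rewrite /Pk conv_FP /Rk' -R_P //; lia.
  have c2 : Rk' q.+1 * PSprod (iota 0 q.+1) Rk' = PSprod (iota 0 q.+1) Rk' * Rk' q.+1.
    apply: PSprod_conj => s; rewrite mem_iota => hs.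
    rewrite /Rk' R_comm //; apply: hk; lia.
  rewrite PSprod_rcons.
  move: (PSprod (iota 0 q.+1) Rk') (PSprod (rev (iota 0 q.+1)) Pk) c1 c2 => PR PP c1 c2.
  by rewrite -c2 -!mulrA [Pk q.+1 * (_ * _)]mulrA c1 !mulrA.
rewrite /F_chain /FP_chain.
change (cf (MkPS (ps_prod (rev (iota 0 p.+1)) (fun k => F_link N X Y k (nu k.+1)))) =
  cf (MkPS (ps_prod (iota 0 p.+1) (fun k => exp_H_sigma N Y (HR N X k) k (nu k.+1))) *
      MkPS (ps_prod (rev (iota 0 p.+1)) (fun k => FP_link N X Y k (nu k.+1))))).
rewrite !ps_prodE !etaPS chain //; congr (cf (_ * _)).
by congr PSprod; apply: funext => k; rewrite conv_exp.
Qed.
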